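(* Let $L=3$. Consider the five peak patterns (a) one peak, (b) two peaks at Hamming distance $2$, (c) two peaks at Hamming distance $3$, (d) three peaks, (e) four peaks, and the six symmetry types of regular triangulations of $[0,1]^3$ (Types 1–6, described in the context). Call a peak pattern $P$ and a type $T$ compatible if there exists a generic fitness landscape $w:\{0,1\}^3\to\mathbb{R}_{\ge 0}$ whose fitness graph has peak pattern $P$ and whose induced triangulation is of type $T$. Then: (1) the pattern with four peaks is compatible with Types 1 and 2 and with no other type; (2) the pattern with three peaks is compatible with Types 1–5 but not with Type 6; (3) each of the remaining three peak patterns (one peak; two peaks at distance 2; two peaks at distance 3) is compatible with all six types. In particular exactly $25$ of the $30$ combinations of peak pattern and triangulation type are compatible.
   Context: A fitness landscape is a map $w:\{0,1\}^L\to\mathbb{R}_{\ge 0}$, $g\mapsto w_g$; genotypes $g\in\{0,1\}^L$ are identified with the vertices of $[0,1]^L$. The triangulation (shape) induced by $w$ is the regular subdivision of $[0,1]^L$ obtained by projecting onto $[0,1]^L$ the upper faces of the polytope $\mathrm{conv}\{(g,w_g): g\in\{0,1\}^L\}\subset\mathbb{R}^{L+1}$. The landscape $w$ is generic if all values $w_g$ are distinct and this subdivision is a triangulation. The fitness graph of $w$ is the $L$-cube graph in which each edge between genotypes at Hamming distance $1$ is directed toward the genotype of higher fitness. A peak is a genotype all of whose Hamming neighbours have strictly lower fitness. The peak pattern of a fitness graph is the orbit of its set of peaks under the symmetry group of the cube (coordinate permutations and bit flips); for $L=3$ the possible patterns are exactly the five listed. The $74$ regular triangulations of $[0,1]^3$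 fall into six classes under cube symmetries. For a genotype $v$, its corner tetrahedron is $\{v\}$ together with its three Hamming neighbours. Type 1 (corner-cut): the five tetrahedra consisting of the corner tetrahedra of $100,010,001,111$ and the central tetrahedron $\{000,110,101,011\}$ (and images under symmetry). The other five types each consist of six tetrahedra and contain a main diagonal, say $\{000,111\}$ up to symmetry: the remaining six vertices form the cyclic sequence $100,110,010,011,001,101$ (consecutive ones adjacent in the cube); for a set $K$ of pairwise non-consecutive vertices of this cycle, the triangulation consists of the tetrahedra $\{000,111,a,b\}$ for $a,b$ consecutive in the cycle obtained by deleting the vertices of $K$, together with the corner tetrahedra of the vertices in $K$. Type 6 (staircase) is $K=\emptyset$; Type 2 is $|K|=3$; Types 3, 4, 5 are the remaining three classes, namely $|K|=1$, $|K|=2$ with the two vertices at cycle distance $2$, and $|K|=2$ with the two vertices opposite on the cycle. *)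

(* Defs.v *)
From HB Require Import structures.
From mathcomp Require Import all_boot all_order fingroup perm all_algebra.
From mathcomp Require Import reals.
Set Implicit Arguments.
Unset Strict Implicit.
Unset Printing Implicit Defensive.
Import Order.TTheory GRing.Theory Num.Theory.
Local Open Scope ring_scope.

(** Genotypes: {0,1}^3, coordinate i is the i-th bit (so "100" has bit 0 set). *)
Definition genotype := {ffun 'I_3 -> bool}.

Definition mkg (b0 b1 b2 : bool) : genotype :=
  [ffun i : 'I_3 => nth false [:: b0; b1; b2] i].

Definition g000 := mkg false false false.
Definition g100 := mkg true  false false.
Definition g010 := mkg false true  false.
Definition g001 := mkg false false true.
Definition g110 := mkg true  true  false.
Definition g101 := mkg true  false true.
Definition g011 := mkg false true  true.
Definition g111 := mkg true  true  true.

Definition hamming (g h : genotype) : nat := #|[set i | g i != h i]|.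
Definition neighbour (g h : genotype) : bool := hamming g h == 1%N.

Definition coord (R : realType) (g : genotype) (i : 'I_3) : R := (g i : nat)%:R.
Definition aff (R : realType) (a : 'I_3 -> R) (b : R) (g : genotype) : R :=
  \sum_(i < 3) a i * coord R g i + b.

(** S is (the vertex set of) an upper face of conv{(g, w g)}: there is a
    supporting affine function h >= w whose contact set is exactly S. *)
Definition upper_cell (R : realType) (w : genotype -> R) (S : {set genotype}) : Prop :=
  exists (a : 'I_3 -> R) (b : R),
    (forall g, w g <= aff a b g) /\ (forall g, aff a b g = w g <-> g \in S).

Definition full_dim (R : realType) (S : {set genotype}) : Prop :=
  forall (a : 'I_3 -> R) (b : R),
    (forall g, g \in S -> aff a b g = 0) -> forall i, a i = 0.

Definition max_cell (R : realType) (w : genotype -> R) (S : {set genotype}) : Prop :=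
  upper_cell w S /\ full_dim R S.

Definition is_triangulation (R : realType) (w : genotype -> R) : Prop :=
  forall S, max_cell w S -> #|S| = 4%N.

Definition generic (R : realType) (w : genotype -> R) : Prop :=
  injective w /\ is_triangulation w.

Definition is_peak (R : realType) (w : genotype -> R) (g : genotype) : Prop :=
  forall h, neighbour g h -> w h < w g.

Inductive peak_pattern :=
  OnePeak | TwoPeaksDist2 | TwoPeaksDist3 | ThreePeaks | FourPeaks.

Definition pattern_cond (P : peak_pattern) (S : {set genotype}) : bool :=
  match P with
  | OnePeak => #|S| == 1%N
  | TwoPeaksDist2 => (#|S| == 2%N) && [exists p in S, exists q in S, hamming p q == 2%N]
  | TwoPeaksDist3 => (#|S| == 2%N) && [exists p in S, exists q in S, hamming p q == 3%N]
  | ThreePeaks => #|S| == 3%N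
  | FourPeaks => #|S| == 4%N
  end.

Definition has_pattern (R : realType) (w : genotype -> R) (P : peak_pattern) : Prop :=
  exists S : {set genotype}, (forall g, is_peak w g <-> g \in S) /\ pattern_cond P S.

Definition sym (p : {perm 'I_3}) (f : genotype) (g : genotype) : genotype :=
  [ffun i => addb (g (p i)) (f i)].

Definition corner (v : genotype) : {set genotype} := v |: [set u | neighbour v u].

(** The cycle 100,110,010,011,001,101 around the main diagonal {000,111}. *)
Definition cyc : seq genotype := [:: g100; g110; g010; g011; g001; g101].

(** Triangulation containing the diagonal {000,111}, with corner set K. *)
Definition diag_tri (K : seq genotype) : {set {set genotype}} :=
  let c := [seq v <- cyc | v \notin K] in
  [set [set g000; g111; nth g000 c i; nth g000 c (i.+1 %% size c)]
     | i : 'I_6 & (i < size c)%N]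
  :|: [set corner v | v in K].

Inductive tri_type := Type1 | Type2 | Type3 | Type4 | Type5 | Type6.

Definition rep (T : tri_type) : {set {set genotype}} :=
  match T with
  | Type1 => [set corner g100; corner g010; corner g001; corner g111;
                  [set g000; g110; g101; g011]]
  | Type2 => diag_tri [:: g100; g010; g001]
  | Type3 => diag_tri [:: g100]
  | Type4 => diag_tri [:: g100; g010]   (* cycle distance 2 *)
  | Type5 => diag_tri [:: g100; g011]   (* opposite on the cycle *)
  | Type6 => diag_tri [::]              (* staircase *)
  end.

Definition has_type (R : realType) (w : genotype -> R) (T : tri_type) : Prop :=
  exists (p : {perm 'I_3}) (f : genotype),
    forall S, max_cell w S <-> S \in [set [set sym p f x | x in U] | U : {set genotype} in rep T].

Definition compatible (R : realType) (P : peak_pattern) (T : tri_type) : Prop :=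
  exists w : genotype -> R,
    (forall g, 0 <= w g) /\ generic w /\ has_pattern w P /\ has_type w T.

(* Main.v *)
Require Import Defs.
From mathcomp Require Import all_boot all_order fingroup perm all_algebra.
From mathcomp Require Import reals.
From mathcomp Require Import ring lra.
Set Implicit Arguments.
Unset Strict Implicit.
Unset Printing Implicit Defensive.
Import Order.TTheory GRing.Theory Num.Theory.
Local Open Scope ring_scope.

Definition i0 : 'I_3 := @Ordinal 3 0 isT.
Definition i1 : 'I_3 := @Ordinal 3 1 isT.
Definition i2 : 'I_3 := @Ordinal 3 2 isT.

Lemma ord3P (i : 'I_3) : i = i0 \/ i = i1 \/ i = i2.
Proof.
case: i => [[|[|[|k]]] Hk]; [left|right;left|right;right|by []];
  by apply: val_inj.
Qed.

Lemma mkgE b0 b1 b2 :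
  [/\ mkg b0 b1 b2 i0 = b0, mkg b0 b1 b2 i1 = b1 & mkg b0 b1 b2 i2 = b2].
Proof. by rewrite !ffunE. Qed.

Lemma mkg_eta (g : genotype) : g = mkg (g i0) (g i1) (g i2).
Proof.
apply/ffunP => i; case: (ord3P i) => [->|[->|->]]; by rewrite ffunE.
Qed.

Definition bitn (j c : nat) : bool := odd (iter j half c).
Definition decode (c : nat) : genotype := mkg (bitn 0 c) (bitn 1 c) (bitn 2 c).
Definition code (g : genotype) : nat := (g i0 + 2 * g i1 + 4 * g i2)%N.

Lemma decode_i c : [/\ decode c i0 = bitn 0 c, decode c i1 = bitn 1 c & decode c i2 = bitn 2 c].
Proof. by rewrite !ffunE. Qed.

Lemma decodeK g : decode (code g) = g.
Proof.
rewrite [in RHS](mkg_eta g) /code.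
by case: (g i0); case: (g i1); case: (g i2).
Qed.

Lemma code_lt8 g : (code g < 8)%N.
Proof. by rewrite /code; case: (g i0); case: (g i1); case: (g i2). Qed.

Lemma codeK c : (c < 8)%N -> code (decode c) = c.
Proof.
by do 8?[case: c => [|c] //] => _; rewrite /code !ffunE.
Qed.

Lemma decode_inj_eq a b : (a < 8)%N -> (b < 8)%N -> (decode a == decode b) = (a == b).
Proof.
move=> ha hb; apply/eqP/eqP => [e|->//].
by rewrite -(codeK ha) -(codeK hb) e.
Qed.

Definition codes := iota 0 8.

Lemma affE (R : realType) (a : 'I_3 -> R) b g :
  aff a b g = a i0 * (g i0 : nat)%:R + a i1 * (g i1 : nat)%:R + a i2 * (g i2 : nat)%:R + b.
Proof.
rewrite /aff /coord !big_ord_recl big_ord0 addr0 !addrA.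
have -> : lift ord0 ord0 = i1 by apply: val_inj.
have -> : lift ord0 (lift ord0 (ord0 : 'I_1)) = i2 by apply: val_inj.
by have -> : (ord0 : 'I_3) = i0 by apply: val_inj.
Qed.

Lemma hammingE g h :
  hamming g h = ((g i0 != h i0) + (g i1 != h i1) + (g i2 != h i2))%N.
Proof.
rewrite /hamming -sum1_card big_mkcond /= !big_ord_recl big_ord0 addn0 !inE addnA.
have -> : lift ord0 ord0 = i1 by apply: val_inj.
have -> : lift ord0 (lift ord0 (ord0 : 'I_1)) = i2 by apply: val_inj.
have -> : (ord0 : 'I_3) = i0 by apply: val_inj.
by case: (g i0 != h i0); case: (g i1 != h i1); case: (g i2 != h i2).
Qed.

Section Gen.
Variable R : realType.

Fixpoint sumR (f : nat -> R) (A : seq nat) : R :=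
  if A is c :: A' then f c + sumR f A' else 0.

Definition bsum (j : nat) (A : seq nat) : nat := sumn [seq (bitn j c : nat) | c <- A].
Definition sumw (wn : seq nat) (A : seq nat) : nat := sumn [seq nth 0 wn c | c <- A].

Lemma sum_aff (a : 'I_3 -> R) b A :
  sumR (fun c => aff a b (decode c)) A =
  a i0 * (bsum 0 A)%:R + a i1 * (bsum 1 A)%:R + a i2 * (bsum 2 A)%:R + b * (size A)%:R.
Proof.
elim: A => [|c A IH] /=; first by rewrite /bsum /= !mulr0 !addr0.
rewrite IH affE; case: (decode_i c) => -> -> ->.
rewrite /bsum /= !natrD -(addn1 (size A)) natrD; ring.
Qed.

Definition vec (p q : seq nat) : 'I_3 -> R := fun i => (nth 0 p i)%:R - (nth 0 q i)%:R.
Definition dot (p : seq nat) (c : nat) : nat :=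
  (nth 0 p 0 * bitn 0 c + nth 0 p 1 * bitn 1 c + nth 0 p 2 * bitn 2 c)%N.

Lemma aff_vec p q (bp bn : nat) c :
  aff (vec p q) (bp%:R - bn%:R) (decode c) = (dot p c + bp)%:R - (dot q c + bn)%:R.
Proof.
rewrite affE; case: (decode_i c) => -> -> ->.
rewrite /vec /dot /= !natrD !natrM; ring.
Qed.

Definition wR (wn : seq nat) (g : genotype) : R := (nth 0 wn (code g))%:R.

Lemma sumR_w wn A : all (fun c => c < 8)%N A ->
  sumR (fun c => wR wn (decode c)) A = (sumw wn A)%:R.
Proof.
elim: A => [|c A IH] //= /andP[hc hA].
by rewrite IH // /wR codeK // /sumw /= natrD.
Qed.

Lemma sumR_eq (f g : nat -> R) A : (forall c, c \in A -> f c = g c) -> sumR f A = sumR g A.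
Proof.
elim: A => [|c A IH] //= H; rewrite H ?mem_head // IH // => x hx.
by apply: H; rewrite inE hx orbT.
Qed.

Lemma sumR_le (f g : nat -> R) A : (forall c, f c <= g c) -> sumR f A <= sumR g A.
Proof. by move=> H; elim: A => [|c A IH] //=; apply: lerD. Qed.

End Gen.

Definition setc (t : seq nat) : {set genotype} := [set g | code g \in t].

Lemma in_setc g t : (g \in setc t) = (code g \in t).
Proof. by rewrite inE. Qed.

Lemma decode_setc c t : (c < 8)%N -> (decode c \in setc t) = (c \in t).
Proof. by move=> h; rewrite in_setc codeK. Qed.

Fixpoint allb (n : nat) : seq (seq bool) :=
  if n is n'.+1 then [seq b :: l | b <- [:: false; true], l <- allb n'] else [:: [::]].

Lemma allb_mem l : l \in allb (size l).
Proof.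
elim: l => [|b l IH] //.
change (b :: l \in [seq x :: y | x <- [:: false; true], y <- allb (size l)]).
by apply/allpairsPdep; exists b, l; split => //; case: b.
Qed.

Definition gmask (S : {set genotype}) : seq bool := [seq decode c \in S | c <- codes].

Lemma gmask_size S : size (gmask S) = 8%N.
Proof. by rewrite size_map. Qed.

Lemma gmask_nth S c : (c < 8)%N -> nth false (gmask S) c = (decode c \in S).
Proof. by move=> h; rewrite (nth_map 0) ?size_iota // nth_iota. Qed.

Lemma gmask_all S : gmask S \in allb 8.
Proof. by have := allb_mem (gmask S); rewrite gmask_size. Qed.

Record plane := Plane { pnp : seq nat; pnn : seq nat; pd1 : nat; pd2 : nat; ppts : seq nat }.
Definition planes : seq plane := [:: Plane [:: 0; 0; 0] [:: 0; 0; 1] 0 0 [:: 0; 1; 2; 3];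
  Plane [:: 0; 1; 0] [:: 0; 0; 0] 0 0 [:: 0; 1; 4; 5];
  Plane [:: 0; 1; 0] [:: 0; 0; 1] 0 0 [:: 0; 1; 6; 7];
  Plane [:: 0; 0; 0] [:: 1; 0; 0] 0 0 [:: 0; 2; 4; 6];
  Plane [:: 0; 0; 1] [:: 1; 0; 0] 0 0 [:: 0; 2; 5; 7];
  Plane [:: 0; 1; 0] [:: 1; 0; 0] 0 0 [:: 0; 3; 4; 7];
  Plane [:: 1; 0; 0] [:: 0; 1; 1] 0 0 [:: 0; 3; 5];
  Plane [:: 1; 0; 1] [:: 0; 1; 0] 0 0 [:: 0; 3; 6];
  Plane [:: 0; 0; 1] [:: 1; 1; 0] 0 0 [:: 0; 5; 6];
  Plane [:: 1; 1; 1] [:: 0; 0; 0] 0 1 [:: 1; 2; 4];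
  Plane [:: 0; 0; 0] [:: 1; 1; 0] 1 0 [:: 1; 2; 5; 6];
  Plane [:: 1; 1; 0] [:: 0; 0; 1] 0 1 [:: 1; 2; 7];
  Plane [:: 0; 0; 0] [:: 1; 0; 1] 1 0 [:: 1; 3; 4; 6];
  Plane [:: 0; 0; 0] [:: 1; 0; 0] 1 0 [:: 1; 3; 5; 7];
  Plane [:: 0; 1; 0] [:: 1; 0; 1] 1 0 [:: 1; 4; 7];
  Plane [:: 0; 1; 1] [:: 0; 0; 0] 0 1 [:: 2; 3; 4; 5];
  Plane [:: 0; 1; 0] [:: 0; 0; 0] 0 1 [:: 2; 3; 6; 7];
  Plane [:: 0; 1; 1] [:: 1; 0; 0] 0 1 [:: 2; 4; 7];
  Plane [:: 0; 0; 0] [:: 1; 1; 1] 2 0 [:: 3; 5; 6];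
  Plane [:: 0; 0; 0] [:: 0; 0; 1] 1 0 [:: 4; 5; 6; 7]].
Definition circuits : seq (seq nat * seq nat) := [:: ([:: 0; 0; 7], [:: 1; 2; 4]);
  ([:: 0; 7; 7], [:: 3; 5; 6]);
  ([:: 0; 7], [:: 3; 4]);
  ([:: 0; 5; 6], [:: 3; 4; 4]);
  ([:: 0; 7], [:: 2; 5]);
  ([:: 0; 6], [:: 2; 4]);
  ([:: 0; 3; 6], [:: 2; 2; 5]);
  ([:: 0; 7], [:: 1; 6]);
  ([:: 0; 5], [:: 1; 4]);
  ([:: 0; 3], [:: 1; 2]);
  ([:: 0; 3; 5], [:: 1; 1; 6]);
  ([:: 1; 2; 7], [:: 3; 3; 4]);
  ([:: 1; 7], [:: 3; 5]);
  ([:: 1; 6], [:: 3; 4]);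
  ([:: 1; 4; 7], [:: 2; 5; 5]);
  ([:: 1; 6], [:: 2; 5]);
  ([:: 1; 6; 6], [:: 2; 4; 7]);
  ([:: 2; 7], [:: 3; 6]);
  ([:: 2; 5], [:: 3; 4]);
  ([:: 4; 7], [:: 5; 6])].

Definition plane_ok (P : plane) : bool :=
  all (fun c => (dot (pnp P) c + pd1 P == dot (pnn P) c + pd2 P)%N) (ppts P) &&
  [|| nth 0 (pnp P) 0 != nth 0 (pnn P) 0, nth 0 (pnp P) 1 != nth 0 (pnn P) 1
    | nth 0 (pnp P) 2 != nth 0 (pnn P) 2].

Lemma planes_ok : all plane_ok planes.
Proof. by []. Qed.

Definition circuit_ok (AB : seq nat * seq nat) : bool :=
  [&& bsum 0 AB.1 == bsum 0 AB.2, bsum 1 AB.1 == bsum 1 AB.2,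
      bsum 2 AB.1 == bsum 2 AB.2, size AB.1 == size AB.2
    & all (fun c => c < 8)%N (AB.1 ++ AB.2)].

Lemma circuits_ok : all circuit_ok circuits.
Proof. by []. Qed.

Lemma mem_codes g : code g \in codes.
Proof. by rewrite mem_iota add0n code_lt8. Qed.

Lemma plane_not_fd (R : realType) (S : {set genotype}) P :
  plane_ok P -> full_dim R S ->
  ~~ all (fun c => nth false (gmask S) c ==> (c \in ppts P)) codes.
Proof.
case/andP=> Heq Hnz Hfd; apply/negP => Hall.
have H0 := Hfd (vec R (pnp P) (pnn P)) ((pd1 P)%:R - (pd2 P)%:R).
have H1 : forall i, vec R (pnp P) (pnn P) i = 0.
  apply: H0 => g hg.
  have hc : code g \in ppts P.
    have := allP Hall _ (mem_codes g).
    by rewrite gmask_nth ?code_lt8 // decodeK hg.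
  rewrite -(decodeK g) aff_vec.
  by rewrite (eqP (allP Heq _ hc)) subrr.
have E : forall (x y : nat), ((x%:R : R) - y%:R == 0) = (x == y).
  by move=> x y; rewrite subr_eq0 eqr_nat.
case/or3P: Hnz => /negP; apply.
- by have := H1 i0; rewrite /vec /= => /eqP; rewrite E.
- by have := H1 i1; rewrite /vec /= => /eqP; rewrite E.
- by have := H1 i2; rewrite /vec /= => /eqP; rewrite E.
Qed.

Lemma circ_le (R : realType) wn S A B : circuit_ok (A, B) -> upper_cell (wR R wn) S ->
  all (fun c => decode c \in S) A -> (sumw wn B <= sumw wn A)%N.
Proof.
case/and5P => /= /eqP e0 /eqP e1 /eqP e2 /eqP es; rewrite all_cat => /andP[hA hB].
move=> [a [b [Hle Hiff]]] HS.
rewrite -(ler_nat R) -!sumR_w //.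
apply: (le_trans (sumR_le _ (fun c => Hle (decode c)))).
rewrite sum_aff -e0 -e1 -e2 -es -sum_aff.
rewrite le_eqVlt; apply/orP; left; apply/eqP.
apply: sumR_eq => c hc; apply/Hiff.
exact: (allP HS).
Qed.

Definition planarb (l : seq bool) : bool :=
  has (fun P => all (fun c => nth false l c ==> (c \in ppts P)) codes) planes.

Definition circ_good (wn : seq nat) (l : seq bool) : bool :=
  all (fun AB => (all (nth false l) AB.1 ==> (sumw wn AB.2 <= sumw wn AB.1)%N) &&
                 (all (nth false l) AB.2 ==> (sumw wn AB.1 <= sumw wn AB.2)%N)) circuits.

Definition maskeq (l : seq bool) (t : seq nat) : bool :=
  all (fun c => nth false l c == (c \in t)) codes.

Definition checkmc (wn : seq nat) (tets : seq (seq nat)) : bool :=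
  all (fun l => (~~ planarb l && circ_good wn l) ==> has (maskeq l) tets) (allb 8).

Lemma all_lt8_mask S A : all (fun c => c < 8)%N A ->
  all (nth false (gmask S)) A -> all (fun c => decode c \in S) A.
Proof.
move=> /allP h1 /allP h2; apply/allP => c hc.
by rewrite -gmask_nth ?h1 // h2.
Qed.

Theorem MC1 (R : realType) wn tets S : checkmc wn tets -> max_cell (wR R wn) S ->
  exists2 t, t \in tets & S = setc t.
Proof.
move=> /allP Hc [Hup Hfd].
have := Hc _ (gmask_all S).
have -> : planarb (gmask S) = false.
  apply/negP; rewrite /planarb; move: planes_ok; elim: planes => [|P Ps IH] //=.
  case/andP=> hP hPs; apply/negP; rewrite negb_or (plane_not_fd hP Hfd) /=.
  by apply/negP; apply: IH.
have -> : circ_good wn (gmask S).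
  apply/allP => [[A B]] hAB /=.
  have := allP circuits_ok _ hAB => hok.
  case/and5P: (hok) => _ _ _ _; rewrite all_cat => /andP[hA hB].
  apply/andP; split; apply/implyP => h.
  - exact: (circ_le hok Hup (all_lt8_mask hA h)).
  - have hok' : circuit_ok (B, A).
      case/and5P: hok => /= /eqP e0 /eqP e1 /eqP e2 /eqP es ha.
      by rewrite /circuit_ok /= e0 e1 e2 es !eqxx /= all_cat andbC -all_cat.
    exact: (circ_le hok' Hup (all_lt8_mask hB h)).
move=> /= /hasP [t ht /allP Ht]; exists t => //.
apply/setP => g; rewrite in_setc.
have := Ht _ (mem_codes g); rewrite gmask_nth ?code_lt8 // decodeK.
by move/eqP.
Qed.

Definition cap (k : seq nat) := [:: nth 0 k 0; nth 0 k 1; nth 0 k 2].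
Definition can (k : seq nat) := [:: nth 0 k 3; nth 0 k 4; nth 0 k 5].

Definition cert_ok (wn : seq nat) (t : seq nat) (k : seq nat) : bool :=
  all (fun c => ((dot (can k) c + nth 0 k 7 + nth 0 wn c <= dot (cap k) c + nth 0 k 6)%N) &&
        ((dot (can k) c + nth 0 k 7 + nth 0 wn c == dot (cap k) c + nth 0 k 6)%N == (c \in t)))
    codes.

Lemma cert_upper (R : realType) wn t k : cert_ok wn t k -> upper_cell (wR R wn) (setc t).
Proof.
move=> /allP H.
exists (vec R (cap k) (can k)), ((nth 0 k 6)%:R - (nth 0 k 7)%:R).
have H' := fun g => H _ (mem_codes g).
split => g; rewrite -(decodeK g) aff_vec /wR codeK ?code_lt8 //;
  case/andP: (H' g) => h1 /eqP h2.
- by rewrite lerBrDr -natrD ler_nat addnC.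
- rewrite decode_setc ?code_lt8 // -h2; split => [E|E].
    by move/eqP: E; rewrite subr_eq -natrD eqr_nat eq_sym addnC.
  by apply/eqP; rewrite subr_eq -natrD eqr_nat eq_sym addnC.
Qed.

Section FD.
Variable R : realType.

Lemma diff_lin (a : 'I_3 -> R) b A B :
  sumR (fun c => aff a b (decode c)) A = 0 -> sumR (fun c => aff a b (decode c)) B = 0 ->
  a i0 * ((bsum 0 A)%:R - (bsum 0 B)%:R) + a i1 * ((bsum 1 A)%:R - (bsum 1 B)%:R)
  + a i2 * ((bsum 2 A)%:R - (bsum 2 B)%:R) + b * ((size A)%:R - (size B)%:R) = 0.
Proof.
rewrite !sum_aff => h1 h2.
transitivity ((a i0 * (bsum 0 A)%:R + a i1 * (bsum 1 A)%:R + a i2 * (bsum 2 A)%:R + b * (size A)%:R)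
  - (a i0 * (bsum 0 B)%:R + a i1 * (bsum 1 B)%:R + a i2 * (bsum 2 B)%:R + b * (size B)%:R)).
  by ring.
by rewrite h1 h2 subrr.
Qed.

Lemma nz_diff (x y : nat) : x != y -> ((x%:R : R) - y%:R) != 0.
Proof. by rewrite subr_eq0 eqr_nat. Qed.

Lemma sumR_zero (a : 'I_3 -> R) b t A : all (fun c => c < 8)%N t -> all (fun c => c \in t) A ->
  (forall g, g \in setc t -> aff a b g = 0) ->
  sumR (fun c => aff a b (decode c)) A = 0.
Proof.
move=> /allP ht /allP hA H; elim: A hA => [|c A IH] //= hA.
rewrite H ?decode_setc ?ht ?hA ?mem_head // IH ?addr0 // => x hx.
by apply: hA; rewrite inE hx orbT.
Qed.
End FD.

Definition fd_ok (t : seq nat) (fd : seq (seq nat)) : bool :=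
  let A0 := nth [::] fd 0 in let B0 := nth [::] fd 1 in
  let A1 := nth [::] fd 2 in let B1 := nth [::] fd 3 in
  let A2 := nth [::] fd 4 in let B2 := nth [::] fd 5 in
  [&& all (fun c => c \in t) (A0 ++ B0 ++ A1 ++ B1 ++ A2 ++ B2),
   [&& size A0 == size B0, bsum 1 A0 == bsum 1 B0, bsum 2 A0 == bsum 2 B0 & bsum 0 A0 != bsum 0 B0],
   [&& size A1 == size B1, bsum 0 A1 == bsum 0 B1, bsum 2 A1 == bsum 2 B1 & bsum 1 A1 != bsum 1 B1] &
   [&& size A2 == size B2, bsum 0 A2 == bsum 0 B2, bsum 1 A2 == bsum 1 B2 & bsum 2 A2 != bsum 2 B2]].

Lemma fd_full (R : realType) t fd : all (fun c => c < 8)%N t -> fd_ok t fd -> full_dim R (setc t).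
Proof.
move=> ht /and4P [hall /and4P[s0 e01 e02 n0] /and4P[s1 e10 e12 n1] /and4P[s2 e20 e21 n2]].
rewrite !all_cat in hall.
case/and5P: hall => hA0 hB0 hA1 hB1 /andP[hA2 hB2].
move=> a b H.
have D0 := diff_lin (sumR_zero ht hA0 H) (sumR_zero ht hB0 H).
have D1 := diff_lin (sumR_zero ht hA1 H) (sumR_zero ht hB1 H).
have D2 := diff_lin (sumR_zero ht hB2 H) (sumR_zero ht hB2 H).
have D2' := diff_lin (sumR_zero ht hA2 H) (sumR_zero ht hB2 H).
move: D0 D1 D2'; rewrite (eqP s0) (eqP s1) (eqP s2) (eqP e01) (eqP e02) (eqP e10) (eqP e12)
  (eqP e20) (eqP e21) !subrr !mulr0 !addr0 ?add0r.
move=> /eqP; rewrite mulf_eq0 (negbTE (nz_diff R n0)) orbF => /eqP a0.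
move=> /eqP; rewrite mulf_eq0 (negbTE (nz_diff R n1)) orbF => /eqP a1.
move=> /eqP; rewrite mulf_eq0 (negbTE (nz_diff R n2)) orbF => /eqP a2.
by move=> i; case: (ord3P i) => [->|[->|->]].
Qed.

Definition hamc (c c' : nat) : nat :=
  ((bitn 0 c != bitn 0 c') + (bitn 1 c != bitn 1 c') + (bitn 2 c != bitn 2 c'))%N.

Lemma hamming_dec c c' : hamming (decode c) (decode c') = hamc c c'.
Proof. by rewrite hammingE; case: (decode_i c) => -> -> ->; case: (decode_i c') => -> -> ->. Qed.

Lemma hamming_code g h : hamming g h = hamc (code g) (code h).
Proof. by rewrite -hamming_dec !decodeK. Qed.

Definition peakb (wn : seq nat) (c : nat) : bool :=
  all (fun c' => (hamc c c' == 1%N) ==> (nth 0 wn c' < nth 0 wn c)%N) codes.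

Lemma is_peakE (R : realType) wn g : is_peak (wR R wn) g <-> peakb wn (code g).
Proof.
split.
- move=> H; apply/allP => c' hc'; apply/implyP => hn.
  have h8 : (c' < 8)%N by move: hc'; rewrite mem_iota.
  have := H (decode c'); rewrite /neighbour hamming_code codeK // => /(_ hn).
  by rewrite /wR codeK // ltr_nat.
- move=> /allP H h; rewrite /neighbour hamming_code => hn.
  by have := H _ (mem_codes h); rewrite hn /= /wR ltr_nat.
Qed.

Lemma card_setc t : all (fun c => c < 8)%N t -> uniq t -> #|setc t| = size t.
Proof.
move=> /allP ht ut.
have -> : #|setc t| = #|[seq decode c | c <- t]|.
  apply: eq_card => g; rewrite in_setc; apply/idP/mapP => [h|[c hc ->]].
    by exists (code g); rewrite ?decodeK.
  by rewrite codeK ?ht.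
have/card_uniqP -> : uniq [seq decode c | c <- t].
  rewrite map_inj_in_uniq // => x y hx hy e.
  by rewrite -(codeK (ht x hx)) -(codeK (ht y hy)) e.
by rewrite size_map.
Qed.

Definition peaks (wn : seq nat) := [seq c <- codes | peakb wn c].

Definition patb (P : peak_pattern) (wn : seq nat) : bool :=
  let pk := peaks wn in
  match P with
  | OnePeak => size pk == 1%N
  | TwoPeaksDist2 => (size pk == 2%N) && has (fun c => has (fun c' => hamc c c' == 2%N) pk) pk
  | TwoPeaksDist3 => (size pk == 2%N) && has (fun c => has (fun c' => hamc c c' == 3%N) pk) pk
  | ThreePeaks => size pk == 3%N
  | FourPeaks => size pk == 4%N
  end.

Lemma peaks_setc wn : [set g | peakb wn (code g)] = setc (peaks wn).
Proof. by apply/setP => g; rewrite in_setc !inE mem_filter mem_codes andbT. Qed.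

Lemma peaks_card wn : #|[set g | peakb wn (code g)]| = size (peaks wn).
Proof.
rewrite peaks_setc card_setc //; last by rewrite filter_uniq // iota_uniq.
by apply/allP => c; rewrite mem_filter mem_iota => /andP[].
Qed.

Lemma peaks_ex wn k : has (fun c => has (fun c' => hamc c c' == k) (peaks wn)) (peaks wn) ->
  [exists p in [set g | peakb wn (code g)], exists q in [set g | peakb wn (code g)], hamming p q == k].
Proof.
move=> /hasP [c hc /hasP [c' hc' hk]].
have h8 : forall x, x \in peaks wn -> (x < 8)%N.
  by move=> x; rewrite mem_filter mem_iota => /andP[].
apply/existsP; exists (decode c); rewrite peaks_setc decode_setc ?h8 // hc /=.
apply/existsP; exists (decode c'); rewrite decode_setc ?h8 // hc' /=.
by rewrite hamming_dec.
Qed.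

Lemma patb_ok P wn : patb P wn -> pattern_cond P [set g | peakb wn (code g)].
Proof.
by case: P => /=; rewrite peaks_card // => /andP[-> /peaks_ex ->].
Qed.

Definition f0 : genotype := [ffun _ => false].

Lemma sym_id g : sym 1 f0 g = g.
Proof. by apply/ffunP => i; rewrite !ffunE perm1 addbF. Qed.

Lemma image_id (A : {set {set genotype}}) :
  [set [set sym 1 f0 x | x in U] | U : {set genotype} in A] = A.
Proof.
have E : (fun U : {set genotype} => [set sym 1 f0 x | x in U]) =1 id.
  move=> U /=; rewrite -[RHS]imset_id; apply: eq_imset => x; exact: sym_id.
by rewrite (eq_imset _ E) imset_id.
Qed.

Lemma all2_mem (T1 T2 : eqType) (r : T1 -> T2 -> bool) s1 s2 x :
  all2 r s1 s2 -> x \in s1 -> exists y, r x y.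
Proof.
elim: s1 s2 => [|a s1 IH] [|b s2] //= /andP[h1 h2].
rewrite inE => /orP[/eqP->|hx]; first by exists b.
exact: IH h2 hx.
Qed.

Definition tet_ok (t : seq nat) : bool := [&& all (fun c => c < 8)%N t, uniq t & size t == 4%N].

Definition pos_ok (P : peak_pattern) (wn : seq nat) (tets : seq (seq nat))
  (certs : seq (seq nat)) (fds : seq (seq (seq nat))) : bool :=
  [&& size wn == 8%N, uniq wn, patb P wn, checkmc wn tets, all tet_ok tets,
      all2 (cert_ok wn) tets certs & all2 fd_ok tets fds].

Theorem pos_compat (R : realType) P T wn tets certs fds :
  (forall S, (S \in rep T) = (S \in [seq setc t | t <- tets])) ->
  pos_ok P wn tets certs fds -> compatible R P T.
Proof.
move=> HT /and5P [/eqP hs hu hp hmc /and3P [htet hce hfd]].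
have Hmax : forall S, max_cell (wR R wn) S <-> S \in [seq setc t | t <- tets].
  move=> S; split.
    by move/(MC1 hmc) => [t ht ->]; apply: map_f.
  case/mapP => t ht ->.
  have /and3P [h8 hu' _] := allP htet _ ht.
  have [k hk] := all2_mem hce ht.
  have [fd hf] := all2_mem hfd ht.
  by split; [apply: cert_upper hk | apply: fd_full hf].
exists (wR R wn); split; first by move=> g; rewrite /wR ler0n.
split; first split.
- move=> g h; rewrite /wR => /eqP; rewrite eqr_nat nth_uniq ?hs ?code_lt8 //.
  by move/eqP=> e; rewrite -(decodeK g) e decodeK.
- move=> S /Hmax /mapP [t ht ->].
  by have /and3P [h8 hu' /eqP <-] := allP htet _ ht; rewrite card_setc.
split.
- exists [set g | peakb wn (code g)]; split; last exact: patb_ok.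
  by move=> g; rewrite inE; apply: is_peakE.
- exists 1%g, f0 => S; rewrite image_id HT; exact: Hmax.
Qed.

Definition cornerc (v : nat) : seq nat := v :: [seq c <- codes | hamc v c == 1%N].

Lemma cornerE v : (v < 8)%N -> corner (decode v) = setc (cornerc v).
Proof.
move=> hv; apply/setP => g; rewrite -(decodeK g).
move: (code g) (code_lt8 g) => k hk.
rewrite decode_setc // /corner !inE mem_filter mem_iota hk /=.
by rewrite decode_inj_eq // /neighbour hamming_dec andbT.
Qed.

Lemma set4E a b c d : (a < 8)%N -> (b < 8)%N -> (c < 8)%N -> (d < 8)%N ->
  [set decode a; decode b; decode c; decode d] = setc [:: a; b; c; d].
Proof.
move=> ha hb hc hd; apply/setP => g; rewrite -(decodeK g).
move: (code g) (code_lt8 g) => k hk.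
rewrite decode_setc // !inE (decode_inj_eq hk ha) (decode_inj_eq hk hb).
by rewrite (decode_inj_eq hk hc) (decode_inj_eq hk hd) !orbA.
Qed.

Definition cycc : seq nat := [:: 1; 3; 2; 6; 4; 5].

Definition dtets_aux (c Kc : seq nat) : seq (seq nat) :=
  [seq [:: 0; 7; nth 0 c i; nth 0 c (i.+1 %% size c)] | i <- iota 0 (size c)]
  ++ [seq cornerc v | v <- Kc].
Definition dtets (Kc : seq nat) : seq (seq nat) :=
  dtets_aux [seq v <- cycc | v \notin Kc] Kc.

Lemma nth_map_decode s i : nth g000 (map decode s) i = decode (nth 0 s i).
Proof. by elim: s i => [|x s IH] [|i] //=. Qed.

Lemma mem_map_decode v Kc : (v < 8)%N -> all (fun c => c < 8)%N Kc ->
  (decode v \in map decode Kc) = (v \in Kc).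
Proof.
move=> hv; elim: Kc => [|k Kc IH] //= /andP[hk hK].
by rewrite !inE decode_inj_eq // IH.
Qed.

Lemma diag_triE (Kc : seq nat) : all (fun c => c < 8)%N Kc -> forall S,
  (S \in diag_tri (map decode Kc)) = (S \in [seq setc t | t <- dtets Kc]).
Proof.
move=> hK S.
set c := [seq v <- cycc | v \notin Kc].
have hc8 : forall i, (nth 0 c i < 8)%N.
  move=> i; case: (ltnP i (size c)) => hi; last by rewrite nth_default.
  have : nth 0 c i \in cycc by have := mem_nth 0 hi; rewrite mem_filter => /andP[].
  exact: (allP (isT : all (fun x => x < 8)%N cycc)).
have hsz : (size c <= 6)%N by rewrite size_filter (count_size _ cycc).
have Hc : [seq v <- cyc | v \notin map decode Kc] = map decode c.
  rewrite /c (_ : cyc = map decode cycc) // filter_map; congr map; apply: eq_in_filter => v.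
  move=> hv; rewrite /= mem_map_decode //.
  exact: (allP (isT : all (fun x => x < 8)%N cycc)).
rewrite /dtets -/c; clearbody c.
rewrite /diag_tri Hc size_map in_setU map_cat mem_cat; congr orb.
- rewrite -map_comp; apply/imsetP/mapP => [[i hi ->]|[i hi ->]].
    rewrite inE in hi.
    exists (nat_of_ord i); first by rewrite mem_iota.
    by rewrite /= !nth_map_decode -[g000]/(decode 0) -[g111]/(decode 7) set4E.
  rewrite mem_iota /= in hi.
  have hi6 : (i < 6)%N by apply: leq_trans hsz.
  exists (Ordinal hi6); first by rewrite inE.
  by rewrite /= !nth_map_decode -[g000]/(decode 0) -[g111]/(decode 7) set4E.
- rewrite -map_comp; apply/imsetP/mapP => [[v hv ->]|[v hv ->]].
    case/mapP: hv => k hk ->; exists k => //=.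
    by rewrite cornerE //; apply: (allP hK).
  exists (decode v); first by apply: map_f.
  by rewrite cornerE //; apply: (allP hK).
Qed.

Definition tets1 : seq (seq nat) := [:: cornerc 1; cornerc 2; cornerc 4; cornerc 7; [:: 0; 3; 5; 6]].

Lemma repE1 S : (S \in rep Type1) = (S \in [seq setc t | t <- tets1]).
Proof.
rewrite /rep !inE /=.
change g100 with (decode 1); change g010 with (decode 2); change g001 with (decode 4).
change g111 with (decode 7); change g000 with (decode 0); change g110 with (decode 3).
change g101 with (decode 5); change g011 with (decode 6).
rewrite !cornerE // !orbA.
have E : [set decode 0; decode 3; decode 5; decode 6] = setc [:: 0; 3; 5; 6] by apply: set4E.
by rewrite E.
Qed.

Lemma repE_diag T Kc : rep T = diag_tri (map decode Kc) -> all (fun c => c < 8)%N Kc ->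
  forall S, (S \in rep T) = (S \in [seq setc t | t <- dtets Kc]).
Proof. by move=> -> hK S; apply: diag_triE. Qed.

Lemma repE2 S : (S \in rep Type2) = (S \in [seq setc t | t <- dtets [:: 1; 2; 4]]).
Proof.
have E : rep Type2 = diag_tri (map decode [:: 1; 2; 4]) by [].
exact: (@repE_diag Type2 [:: 1; 2; 4] E isT S).
Qed.
Lemma repE3 S : (S \in rep Type3) = (S \in [seq setc t | t <- dtets [:: 1]]).
Proof.
have E : rep Type3 = diag_tri (map decode [:: 1]) by [].
exact: (@repE_diag Type3 [:: 1] E isT S).
Qed.
Lemma repE4 S : (S \in rep Type4) = (S \in [seq setc t | t <- dtets [:: 1; 2]]).
Proof.
have E : rep Type4 = diag_tri (map decode [:: 1; 2]) by [].
exact: (@repE_diag Type4 [:: 1; 2] E isT S).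
Qed.
Lemma repE5 S : (S \in rep Type5) = (S \in [seq setc t | t <- dtets [:: 1; 6]]).
Proof.
have E : rep Type5 = diag_tri (map decode [:: 1; 6]) by [].
exact: (@repE_diag Type5 [:: 1; 6] E isT S).
Qed.
Lemma repE6 S : (S \in rep Type6) = (S \in [seq setc t | t <- dtets [::]]).
Proof.
have E : rep Type6 = diag_tri (map decode [::]) by [].
exact: (@repE_diag Type6 [::] E isT S).
Qed.

Lemma decode_j c (j : 'I_3) : decode c j = bitn j c.
Proof. by case: (ord3P j) => [->|[->|->]]; case: (decode_i c). Qed.

Definition par (g : genotype) : bool := \big[addb/false]_(i < 3) g i.
Definition parc (c : nat) : bool := bitn 0 c (+) bitn 1 c (+) bitn 2 c.

Lemma parE g : par g = g i0 (+) g i1 (+) g i2.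
Proof.
rewrite /par !big_ord_recl big_ord0 addbF addbA.
have -> : lift ord0 ord0 = i1 by apply: val_inj.
have -> : lift ord0 (lift ord0 (ord0 : 'I_1)) = i2 by apply: val_inj.
by have -> : (ord0 : 'I_3) = i0 by apply: val_inj.
Qed.

Lemma par_decode c : par (decode c) = parc c.
Proof. by rewrite parE; case: (decode_i c) => -> -> ->. Qed.

Lemma par_sym (p : {perm 'I_3}) f g : par (sym p f g) = par g (+) par f.
Proof.
rewrite /par /sym.
rewrite (eq_bigr (fun i => g (p i) (+) f i)); last by move=> i _; rewrite ffunE.
rewrite (@big_split bool false [the Monoid.com_law false of addb]) /=; congr addb.
by rewrite [RHS](reindex_inj (@perm_inj _ p)).
Qed.

Lemma sym_inj (p : {perm 'I_3}) f : injective (sym p f).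
Proof.
move=> g h e; apply/ffunP => j.
have := congr1 (fun k : genotype => k (p^-1 j)%g) e; rewrite !ffunE permKV.
by move/addIb.
Qed.

Lemma sym_surj (p : {perm 'I_3}) f h : exists g, sym p f g = h.
Proof.
exists [ffun j => h ((p^-1)%g j) (+) f ((p^-1)%g j)].
apply/ffunP => i; rewrite !ffunE permK.
by rewrite -addbA addbb addbF.
Qed.

Lemma hamming_sym (p : {perm 'I_3}) f g h : hamming (sym p f g) (sym p f h) = hamming g h.
Proof.
rewrite /hamming.
have -> : [set i | sym p f g i != sym p f h i] = p @^-1: [set j | g j != h j].
  apply/setP => i; rewrite !inE !ffunE.
  by case: (f i); case: (g (p i)); case: (h (p i)).
by rewrite card_preimset //; apply: perm_inj.
Qed.

Lemma face_le (R : realType) (w : genotype -> R) S (x y z t : genotype) :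
  upper_cell w S -> x \in S -> y \in S ->
  (forall i, (x i : nat) + y i = (z i : nat) + t i)%N ->
  w z + w t <= w x + w y.
Proof.
move=> [a [b [Hle Hiff]]] hx hy hs.
have ex : aff a b x = w x by apply/Hiff.
have ey : aff a b y = w y by apply/Hiff.
rewrite -ex -ey.
apply: (le_trans (lerD (Hle z) (Hle t))).
rewrite le_eqVlt; apply/orP; left; apply/eqP.
have hR : forall i, ((x i : nat)%:R : R) = (z i : nat)%:R + (t i : nat)%:R - (y i : nat)%:R.
  by move=> i; rewrite -natrD -hs natrD addrK.
rewrite !affE (hR i0) (hR i1) (hR i2); ring.
Qed.

Lemma xor_sum (a b c d e : bool) : (a + b = c + d)%N ->
  ((a (+) e) + (b (+) e) = (c (+) e) + (d (+) e))%N.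
Proof. by case: a; case: b; case: c; case: d; case: e. Qed.

Definition quad_ok (tets : seq (seq nat)) (q : seq nat) : bool :=
  let x := nth 0 q 0 in let y := nth 0 q 1 in let z := nth 0 q 2 in let t := nth 0 q 3 in
  [&& has (fun tau => (x \in tau) && (y \in tau)) tets,
      all (fun j => (bitn j x + bitn j y == bitn j z + bitn j t)%N) [:: 0; 1; 2],
      hamc z x == 1%N, hamc t y == 1%N & all (fun c => c < 8)%N q].

Lemma neg_gen (R : realType) T tets (w : genotype -> R) (p : {perm 'I_3}) f q :
  (forall S, (S \in rep T) = (S \in [seq setc t | t <- tets])) ->
  (forall S, max_cell w S <-> S \in [set [set sym p f x | x in U] | U : {set genotype} in rep T]) ->
  quad_ok tets q ->
  let s := fun c => sym p f (decode c) in
  [/\ w (s (nth 0 q 2)) + w (s (nth 0 q 3)) <= w (s (nth 0 q 0)) + w (s (nth 0 q 1)),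
      neighbour (s (nth 0 q 2)) (s (nth 0 q 0)) & neighbour (s (nth 0 q 3)) (s (nth 0 q 1))].
Proof.
move=> HT Hty hq s; move: hq; rewrite /quad_ok.
case/and5P => /hasP [tau htau] /andP [hx hy] hb hz ht h8.
have h8' : forall k, (k < 4)%N -> (nth 0 q k < 8)%N.
  move=> k hk; case: (ltnP k (size q)) => hq; last by rewrite nth_default.
  by apply: (allP h8); apply: mem_nth.
have [Hup _] : max_cell w [set sym p f g | g in setc tau].
  apply/Hty; apply: imset_f; rewrite HT; exact: map_f.
split.
- apply: (face_le Hup).
  + by apply: imset_f; rewrite decode_setc ?(h8' 0%N) ?hx.
  + by apply: imset_f; rewrite decode_setc ?(h8' 1%N) ?hy.
  + move=> i; rewrite /s !ffunE; apply: xor_sum.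
    move: hb; rewrite /= andbT => /and3P [/eqP e0 /eqP e1 /eqP e2].
    by case: (ord3P (p i)) => [->|[->|->]].
- by rewrite /neighbour /s hamming_sym hamming_dec.
- by rewrite /neighbour /s hamming_sym hamming_dec.
Qed.

Lemma hamc_sym c c' : hamc c c' = hamc c' c.
Proof. by rewrite /hamc (eq_sym (bitn 0 c)) (eq_sym (bitn 1 c)) (eq_sym (bitn 2 c)). Qed.

Lemma card_mask (S : {set genotype}) : #|S| = count (fun c => decode c \in S) codes.
Proof.
rewrite {1}(_ : S = setc [seq c <- codes | decode c \in S]).
  rewrite card_setc ?size_filter //; last by rewrite filter_uniq // iota_uniq.
  by apply/allP => c; rewrite mem_filter mem_iota => /andP[].
by apply/setP => g; rewrite in_setc mem_filter mem_codes andbT decodeK.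
Qed.

Definition indep (l : seq bool) : bool :=
  all (fun c => all (fun c' => (hamc c c' == 1%N) ==> ~~ (nth false l c && nth false l c')) codes) codes.

Lemma peaks_indep (R : realType) (w : genotype -> R) (S : {set genotype}) :
  (forall g, is_peak w g <-> g \in S) -> indep (gmask S).
Proof.
move=> HS; apply/allP => c hc; apply/allP => c' hc'; apply/implyP => hn.
have h8 : (c < 8)%N by move: hc; rewrite mem_iota.
have h8' : (c' < 8)%N by move: hc'; rewrite mem_iota.
rewrite !gmask_nth //; apply/negP => /andP [/HS p1 /HS p2].
have l1 := p1 (decode c'); rewrite /neighbour hamming_dec hn in l1.
have l2 := p2 (decode c); rewrite /neighbour hamming_dec hamc_sym hn in l2.
have := lt_trans (l1 isT) (l2 isT); by rewrite ltxx.
Qed.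

Definition classmask (b : bool) : seq bool := [seq parc c == b | c <- codes].

Definition four_check : bool :=
  all (fun l => ((count id l == 4%N) && indep l) ==> (l == classmask false) || (l == classmask true))
    (allb 8).

Lemma four_check_ok : four_check.
Proof. by vm_compute. Qed.

Lemma count_mask (S : {set genotype}) : count id (gmask S) = count (fun c => decode c \in S) codes.
Proof. by rewrite count_map. Qed.

Lemma gmask_in (S : {set genotype}) g : (g \in S) = nth false (gmask S) (code g).
Proof. by rewrite gmask_nth ?code_lt8 // decodeK. Qed.

Lemma four_struct (R : realType) (w : genotype -> R) (S : {set genotype}) :
  (forall g, is_peak w g <-> g \in S) -> #|S| = 4%N ->
  exists b, forall g, (g \in S) = (par g == b).
Proof.
move=> HS hc.
have := allP four_check_ok _ (gmask_all S).
rewrite count_mask -card_mask hc (peaks_indep HS) /=.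
have E : forall b g, nth false (classmask b) (code g) = (par g == b).
  by move=> b g; rewrite (nth_map 0) ?size_iota ?code_lt8 // nth_iota ?code_lt8 // -par_decode decodeK.
case/orP => /eqP hm; [exists false | exists true] => g; by rewrite gmask_in hm E.
Qed.

Definition three_check : bool :=
  all (fun l => ((count id l == 3%N) && indep l) ==>
     has (fun be => l == [seq (parc c == be.1) && (c != be.2) | c <- codes])
       [seq (b, e) | b <- [:: false; true], e <- codes]) (allb 8).

Lemma three_check_ok : three_check.
Proof. by vm_compute. Qed.

Lemma three_struct (R : realType) (w : genotype -> R) (S : {set genotype}) :
  (forall g, is_peak w g <-> g \in S) -> #|S| = 3%N ->
  exists b e, (e < 8)%N /\ forall g, (g \in S) = (par g == b) && (code g != e).
Proof.
move=> HS hc.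
have := allP three_check_ok _ (gmask_all S).
rewrite count_mask -card_mask hc (peaks_indep HS) eqxx andbT implyTb.
case/hasP => [[b e]] /allpairsP [[b' e'] [hb he [-> ->]]] /= /eqP hm.
exists b', e'; split; first by move: he; rewrite mem_iota.
move=> g; rewrite gmask_in hm -{2}(decodeK g) par_decode.
by move: (code g) (code_lt8 g) => k hk; do 8?[case: k hk => [|k] hk //].
Qed.

Lemma four_neg (R : realType) T tets quads :
  (forall S, (S \in rep T) = (S \in [seq setc t | t <- tets])) ->
  all (quad_ok tets) quads ->
  all (fun b => has (fun q => (parc (nth 0 q 2) == b) && (parc (nth 0 q 3) == b)) quads)
    [:: false; true] ->
  ~ compatible R FourPeaks T.
Proof.
move=> HT hq hpar [w [_ [[winj _] [[S [HS /eqP hc]] [p [f Hty]]]]]].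
have [b Hb] := four_struct HS hc.
have : has (fun q => (parc (nth 0 q 2) == b (+) par f) && (parc (nth 0 q 3) == b (+) par f)) quads.
  by apply: (allP hpar); case: (b (+) par f).
case/hasP => q hqin /andP [/eqP hz /eqP ht].
have [hle hn1 hn2] := neg_gen HT Hty (allP hq _ hqin).
have pk : forall c, parc c = b (+) par f -> is_peak w (sym p f (decode c)).
  by move=> c hcp; apply/HS; rewrite Hb par_sym par_decode hcp -addbA addbb addbF.
have l1 := pk _ hz _ hn1.
have l2 := pk _ ht _ hn2.
have := ltrD l1 l2; rewrite ltNge hle //.
Qed.

Lemma three_neg (R : realType) T tets quads :
  (forall S, (S \in rep T) = (S \in [seq setc t | t <- tets])) ->
  all (quad_ok tets) quads ->
  all (fun b => all (fun e => has (fun q => [&& parc (nth 0 q 2) == b, parc (nth 0 q 3) == b,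
        nth 0 q 2 != e & nth 0 q 3 != e]) quads) codes) [:: false; true] ->
  ~ compatible R ThreePeaks T.
Proof.
move=> HT hq hpar [w [_ [[winj _] [[S [HS /eqP hc]] [p [f Hty]]]]]].
have [b [e [he Hb]]] := three_struct HS hc.
have [g' hg'] := sym_surj p f (decode e).
have : has (fun q => [&& parc (nth 0 q 2) == b (+) par f, parc (nth 0 q 3) == b (+) par f,
        nth 0 q 2 != code g' & nth 0 q 3 != code g']) quads.
  by apply: (allP (allP hpar _ _)); rewrite ?mem_codes //; case: (b (+) par f).
case/hasP => q hqin /and4P [/eqP hz /eqP ht hz' ht'].
have hqok := allP hq _ hqin.
have h8 : forall k, (k < 4)%N -> (nth 0 q k < 8)%N.
  move=> k hk; case: (ltnP k (size q)) => hqs; last by rewrite nth_default.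
  by case/and5P: hqok => _ _ _ _ /allP; apply; apply: mem_nth.
have [hle hn1 hn2] := neg_gen HT Hty hqok.
have pk : forall c, (c < 8)%N -> parc c = b (+) par f -> c != code g' ->
    is_peak w (sym p f (decode c)).
  move=> c c8 hcp hne; apply/HS; rewrite Hb par_sym par_decode hcp -addbA addbb addbF eqxx /=.
  apply/negP => /eqP hce.
  have : sym p f (decode c) = sym p f g' by rewrite hg' -hce decodeK.
  move/sym_inj => ec; move/negP: hne; apply; by rewrite -ec codeK.
have l1 := pk _ (h8 2%N isT) hz hz' _ hn1.
have l2 := pk _ (h8 3%N isT) ht ht' _ hn2.
have := ltrD l1 l2; rewrite ltNge hle //.
Qed.
Lemma c_Four_1 (R : realType) : compatible R FourPeaks Type1.
Proof.
apply: (@pos_compat R FourPeaks Type1 [:: 48; 26; 12; 62; 2; 78; 54; 0] tets1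
  [:: [:: 0; 36; 52; 22; 0; 0; 48; 0]; [:: 50; 0; 42; 0; 36; 0; 48; 0]; [:: 76; 52; 0; 0; 0; 46; 48; 0]; [:: 0; 0; 0; 54; 78; 62; 194; 0]; [:: 19; 0; 11; 0; 5; 0; 48; 0]]
  [:: [:: [:: 1]; [:: 0]; [:: 1]; [:: 3]; [:: 1]; [:: 5]]; [:: [:: 2]; [:: 3]; [:: 2]; [:: 0]; [:: 2]; [:: 6]]; [:: [:: 4]; [:: 5]; [:: 4]; [:: 6]; [:: 4]; [:: 0]]; [:: [:: 7]; [:: 6]; [:: 7]; [:: 5]; [:: 7]; [:: 3]]; [:: [:: 0; 6]; [:: 3; 5]; [:: 0; 5]; [:: 3; 6]; [:: 0; 3]; [:: 5; 6]]]).
  exact: repE1.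
by vm_compute.
Qed.

Lemma c_Four_2 (R : realType) : compatible R FourPeaks Type2.
Proof.
apply: (@pos_compat R FourPeaks Type2 [:: 74; 20; 48; 62; 26; 46; 50; 44] (dtets [:: 1; 2; 4])
  [:: [:: 0; 0; 0; 6; 6; 18; 74; 0]; [:: 0; 0; 0; 6; 2; 22; 74; 0]; [:: 0; 0; 0; 10; 2; 18; 74; 0]; [:: 0; 42; 26; 54; 0; 0; 74; 0]; [:: 14; 0; 2; 0; 26; 0; 74; 0]; [:: 20; 24; 0; 0; 0; 48; 74; 0]]
  [:: [:: [:: 7]; [:: 6]; [:: 0; 7]; [:: 3; 6]; [:: 7]; [:: 3]]; [:: [:: 7]; [:: 6]; [:: 7]; [:: 5]; [:: 0; 7]; [:: 6; 5]]; [:: [:: 0; 7]; [:: 5; 3]; [:: 7]; [:: 5]; [:: 7]; [:: 3]]; [:: [:: 1]; [:: 0]; [:: 1]; [:: 3]; [:: 1]; [:: 5]]; [:: [:: 2]; [:: 3]; [:: 2]; [:: 0]; [:: 2]; [:: 6]]; [:: [:: 4]; [:: 5]; [:: 4]; [:: 6]; [:: 4]; [:: 0]]]).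
  exact: repE2.
by vm_compute.
Qed.

Lemma c_One_1 (R : realType) : compatible R OnePeak Type1.
Proof.
apply: (@pos_compat R OnePeak Type1 [:: 50; 18; 4; 20; 56; 64; 54; 28] tets1
  [:: [:: 0; 2; 46; 32; 0; 0; 50; 0]; [:: 16; 0; 50; 0; 46; 0; 50; 0]; [:: 8; 0; 6; 0; 2; 0; 50; 0]; [:: 0; 0; 8; 26; 36; 0; 82; 0]; [:: 0; 0; 24; 10; 20; 0; 50; 0]]
  [:: [:: [:: 1]; [:: 0]; [:: 1]; [:: 3]; [:: 1]; [:: 5]]; [:: [:: 2]; [:: 3]; [:: 2]; [:: 0]; [:: 2]; [:: 6]]; [:: [:: 4]; [:: 5]; [:: 4]; [:: 6]; [:: 4]; [:: 0]]; [:: [:: 7]; [:: 6]; [:: 7]; [:: 5]; [:: 7]; [:: 3]]; [:: [:: 0; 6]; [:: 3; 5]; [:: 0; 5]; [:: 3; 6]; [:: 0; 3]; [:: 5; 6]]]).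
  exact: repE1.
by vm_compute.
Qed.

Lemma c_One_2 (R : realType) : compatible R OnePeak Type2.
Proof.
apply: (@pos_compat R OnePeak Type2 [:: 54; 4; 6; 10; 64; 60; 70; 46] (dtets [:: 1; 2; 4])
  [:: [:: 0; 0; 36; 24; 20; 0; 54; 0]; [:: 0; 0; 30; 24; 14; 0; 54; 0]; [:: 0; 0; 36; 30; 14; 0; 54; 0]; [:: 0; 6; 56; 50; 0; 0; 54; 0]; [:: 4; 0; 64; 0; 48; 0; 54; 0]; [:: 0; 6; 10; 4; 0; 0; 54; 0]]
  [:: [:: [:: 7]; [:: 6]; [:: 0; 7]; [:: 3; 6]; [:: 7]; [:: 3]]; [:: [:: 7]; [:: 6]; [:: 7]; [:: 5]; [:: 0; 7]; [:: 6; 5]]; [:: [:: 0; 7]; [:: 5; 3]; [:: 7]; [:: 5]; [:: 7]; [:: 3]]; [:: [:: 1]; [:: 0]; [:: 1]; [:: 3]; [:: 1]; [:: 5]]; [:: [:: 2]; [:: 3]; [:: 2]; [:: 0]; [:: 2]; [:: 6]]; [:: [:: 4]; [:: 5]; [:: 4]; [:: 6]; [:: 4]; [:: 0]]]).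
  exact: repE2.
by vm_compute.
Qed.

Lemma c_One_3 (R : realType) : compatible R OnePeak Type3.
Proof.
apply: (@pos_compat R OnePeak Type3 [:: 54; 0; 78; 68; 6; 14; 48; 60] (dtets [:: 1])
  [:: [:: 0; 24; 0; 10; 0; 8; 54; 0]; [:: 12; 24; 0; 0; 0; 30; 54; 0]; [:: 12; 42; 0; 0; 0; 48; 54; 0]; [:: 8; 46; 0; 0; 0; 48; 54; 0]; [:: 0; 46; 0; 32; 0; 8; 54; 0]; [:: 0; 68; 14; 54; 0; 0; 54; 0]]
  [:: [:: [:: 3]; [:: 2]; [:: 0]; [:: 2]; [:: 7]; [:: 3]]; [:: [:: 7]; [:: 6]; [:: 0]; [:: 2]; [:: 2]; [:: 6]]; [:: [:: 7]; [:: 6]; [:: 6]; [:: 4]; [:: 0]; [:: 4]]; [:: [:: 4]; [:: 5]; [:: 7]; [:: 5]; [:: 0]; [:: 4]]; [:: [:: 0; 7]; [:: 5; 3]; [:: 7]; [:: 5]; [:: 7]; [:: 3]]; [:: [:: 1]; [:: 0]; [:: 1]; [:: 3]; [:: 1]; [:: 5]]]).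
  exact: repE3.
by vm_compute.
Qed.

Lemma c_One_4 (R : realType) : compatible R OnePeak Type4.
Proof.
apply: (@pos_compat R OnePeak Type4 [:: 46; 4; 2; 40; 52; 20; 76; 54] (dtets [:: 1; 2])
  [:: [:: 0; 16; 14; 22; 0; 0; 46; 0]; [:: 0; 24; 6; 22; 0; 0; 46; 0]; [:: 0; 34; 6; 32; 0; 0; 46; 0]; [:: 0; 34; 14; 40; 0; 0; 46; 0]; [:: 0; 36; 16; 42; 0; 0; 46; 0]; [:: 38; 0; 74; 0; 44; 0; 46; 0]]
  [:: [:: [:: 7]; [:: 6]; [:: 0; 7]; [:: 3; 6]; [:: 7]; [:: 3]]; [:: [:: 7]; [:: 6]; [:: 6]; [:: 4]; [:: 0]; [:: 4]]; [:: [:: 4]; [:: 5]; [:: 7]; [:: 5]; [:: 0]; [:: 4]]; [:: [:: 0; 7]; [:: 5; 3]; [:: 7]; [:: 5]; [:: 7]; [:: 3]]; [:: [:: 1]; [:: 0]; [:: 1]; [:: 3]; [:: 1]; [:: 5]]; [:: [:: 2]; [:: 3]; [:: 2]; [:: 0]; [:: 2]; [:: 6]]]).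
  exact: repE4.
by vm_compute.
Qed.

Lemma c_One_5 (R : realType) : compatible R OnePeak Type5.
Proof.
apply: (@pos_compat R OnePeak Type5 [:: 66; 14; 18; 40; 72; 70; 8; 56] (dtets [:: 1; 6])
  [:: [:: 22; 0; 16; 0; 48; 0; 66; 0]; [:: 32; 0; 6; 0; 48; 0; 66; 0]; [:: 0; 0; 6; 2; 14; 0; 66; 0]; [:: 0; 0; 16; 12; 14; 0; 66; 0]; [:: 0; 26; 56; 52; 0; 0; 66; 0]; [:: 48; 0; 0; 0; 64; 10; 82; 0]]
  [:: [:: [:: 3]; [:: 2]; [:: 0]; [:: 2]; [:: 7]; [:: 3]]; [:: [:: 0; 7]; [:: 2; 4]; [:: 0]; [:: 2]; [:: 0]; [:: 4]]; [:: [:: 4]; [:: 5]; [:: 7]; [:: 5]; [:: 0]; [:: 4]]; [:: [:: 0; 7]; [:: 5; 3]; [:: 7]; [:: 5]; [:: 7]; [:: 3]]; [:: [:: 1]; [:: 0]; [:: 1]; [:: 3]; [:: 1]; [:: 5]]; [:: [:: 6]; [:: 7]; [:: 6]; [:: 4]; [:: 6]; [:: 2]]]).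
  exact: repE5.
by vm_compute.
Qed.

Lemma c_One_6 (R : realType) : compatible R OnePeak Type6.
Proof.
apply: (@pos_compat R OnePeak Type6 [:: 66; 56; 42; 34; 14; 22; 12; 28] (dtets [::])
  [:: [:: 0; 0; 0; 10; 22; 6; 66; 0]; [:: 0; 0; 0; 8; 24; 6; 66; 0]; [:: 16; 0; 0; 0; 24; 30; 66; 0]; [:: 16; 0; 0; 0; 2; 52; 66; 0]; [:: 8; 6; 0; 0; 0; 52; 66; 0]; [:: 0; 6; 0; 10; 0; 34; 66; 0]]
  [:: [:: [:: 0]; [:: 1]; [:: 1]; [:: 3]; [:: 7]; [:: 3]]; [:: [:: 3]; [:: 2]; [:: 0]; [:: 2]; [:: 7]; [:: 3]]; [:: [:: 7]; [:: 6]; [:: 0]; [:: 2]; [:: 2]; [:: 6]]; [:: [:: 7]; [:: 6]; [:: 6]; [:: 4]; [:: 0]; [:: 4]]; [:: [:: 4]; [:: 5]; [:: 7]; [:: 5]; [:: 0]; [:: 4]]; [:: [:: 0]; [:: 1]; [:: 7]; [:: 5]; [:: 5]; [:: 1]]]).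
  exact: repE6.
by vm_compute.
Qed.

Lemma c_Three_1 (R : realType) : compatible R ThreePeaks Type1.
Proof.
apply: (@pos_compat R ThreePeaks Type1 [:: 36; 2; 52; 70; 12; 22; 78; 14] tets1
  [:: [:: 0; 68; 20; 34; 0; 0; 36; 0]; [:: 18; 16; 26; 0; 0; 0; 36; 0]; [:: 10; 66; 0; 0; 0; 24; 36; 0]; [:: 0; 0; 0; 64; 8; 56; 142; 0]; [:: 0; 45; 0; 11; 0; 3; 36; 0]]
  [:: [:: [:: 1]; [:: 0]; [:: 1]; [:: 3]; [:: 1]; [:: 5]]; [:: [:: 2]; [:: 3]; [:: 2]; [:: 0]; [:: 2]; [:: 6]]; [:: [:: 4]; [:: 5]; [:: 4]; [:: 6]; [:: 4]; [:: 0]]; [:: [:: 7]; [:: 6]; [:: 7]; [:: 5]; [:: 7]; [:: 3]]; [:: [:: 0; 6]; [:: 3; 5]; [:: 0; 5]; [:: 3; 6]; [:: 0; 3]; [:: 5; 6]]]).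
  exact: repE1.
by vm_compute.
Qed.

Lemma c_Three_2 (R : realType) : compatible R ThreePeaks Type2.
Proof.
apply: (@pos_compat R ThreePeaks Type2 [:: 66; 0; 4; 54; 34; 52; 16; 30] (dtets [:: 1; 2; 4])
  [:: [:: 14; 0; 0; 0; 26; 24; 66; 0]; [:: 14; 0; 0; 0; 22; 28; 66; 0]; [:: 10; 0; 0; 0; 22; 24; 66; 0]; [:: 0; 54; 52; 66; 0; 0; 66; 0]; [:: 50; 0; 12; 0; 62; 0; 66; 0]; [:: 18; 0; 0; 0; 18; 32; 66; 0]]
  [:: [:: [:: 7]; [:: 6]; [:: 0; 7]; [:: 3; 6]; [:: 7]; [:: 3]]; [:: [:: 7]; [:: 6]; [:: 7]; [:: 5]; [:: 0; 7]; [:: 6; 5]]; [:: [:: 0; 7]; [:: 5; 3]; [:: 7]; [:: 5]; [:: 7]; [:: 3]]; [:: [:: 1]; [:: 0]; [:: 1]; [:: 3]; [:: 1]; [:: 5]]; [:: [:: 2]; [:: 3]; [:: 2]; [:: 0]; [:: 2]; [:: 6]]; [:: [:: 4]; [:: 5]; [:: 4]; [:: 6]; [:: 4]; [:: 0]]]).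
  exact: repE2.
by vm_compute.
Qed.

Lemma c_Three_3 (R : realType) : compatible R ThreePeaks Type3.
Proof.
apply: (@pos_compat R ThreePeaks Type3 [:: 66; 30; 34; 54; 22; 58; 6; 44] (dtets [:: 1])
  [:: [:: 20; 0; 0; 0; 32; 10; 66; 0]; [:: 38; 0; 0; 0; 32; 28; 66; 0]; [:: 38; 0; 0; 0; 16; 44; 66; 0]; [:: 36; 0; 0; 0; 14; 44; 66; 0]; [:: 2; 0; 0; 0; 14; 10; 66; 0]; [:: 0; 24; 28; 36; 0; 0; 66; 0]]
  [:: [:: [:: 3]; [:: 2]; [:: 0]; [:: 2]; [:: 7]; [:: 3]]; [:: [:: 7]; [:: 6]; [:: 0]; [:: 2]; [:: 2]; [:: 6]]; [:: [:: 7]; [:: 6]; [:: 6]; [:: 4]; [:: 0]; [:: 4]]; [:: [:: 4]; [:: 5]; [:: 7]; [:: 5]; [:: 0]; [:: 4]]; [:: [:: 0; 7]; [:: 5; 3]; [:: 7]; [:: 5]; [:: 7]; [:: 3]]; [:: [:: 1]; [:: 0]; [:: 1]; [:: 3]; [:: 1]; [:: 5]]]).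
  exact: repE3.
by vm_compute.
Qed.

Lemma c_Three_4 (R : realType) : compatible R ThreePeaks Type4.
Proof.
apply: (@pos_compat R ThreePeaks Type4 [:: 68; 26; 42; 62; 12; 0; 44; 34] (dtets [:: 1; 2])
  [:: [:: 0; 4; 0; 10; 0; 28; 68; 0]; [:: 0; 32; 0; 10; 0; 56; 68; 0]; [:: 0; 34; 0; 12; 0; 56; 68; 0]; [:: 0; 34; 0; 40; 0; 28; 68; 0]; [:: 0; 36; 0; 42; 0; 26; 68; 0]; [:: 20; 0; 2; 0; 26; 0; 68; 0]]
  [:: [:: [:: 7]; [:: 6]; [:: 0; 7]; [:: 3; 6]; [:: 7]; [:: 3]]; [:: [:: 7]; [:: 6]; [:: 6]; [:: 4]; [:: 0]; [:: 4]]; [:: [:: 4]; [:: 5]; [:: 7]; [:: 5]; [:: 0]; [:: 4]]; [:: [:: 0; 7]; [:: 5; 3]; [:: 7]; [:: 5]; [:: 7]; [:: 3]]; [:: [:: 1]; [:: 0]; [:: 1]; [:: 3]; [:: 1]; [:: 5]]; [:: [:: 2]; [:: 3]; [:: 2]; [:: 0]; [:: 2]; [:: 6]]]).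
  exact: repE4.
by vm_compute.
Qed.

Lemma c_Three_5 (R : realType) : compatible R ThreePeaks Type5.
Proof.
apply: (@pos_compat R ThreePeaks Type5 [:: 44; 4; 62; 30; 46; 26; 14; 48] (dtets [:: 1; 6])
  [:: [:: 0; 18; 18; 32; 0; 0; 44; 0]; [:: 0; 18; 2; 16; 0; 0; 44; 0]; [:: 0; 22; 2; 20; 0; 0; 44; 0]; [:: 0; 22; 18; 36; 0; 0; 44; 0]; [:: 0; 26; 22; 40; 0; 0; 44; 0]; [:: 34; 0; 0; 0; 32; 48; 94; 0]]
  [:: [:: [:: 3]; [:: 2]; [:: 0]; [:: 2]; [:: 7]; [:: 3]]; [:: [:: 0; 7]; [:: 2; 4]; [:: 0]; [:: 2]; [:: 0]; [:: 4]]; [:: [:: 4]; [:: 5]; [:: 7]; [:: 5]; [:: 0]; [:: 4]]; [:: [:: 0; 7]; [:: 5; 3]; [:: 7]; [:: 5]; [:: 7]; [:: 3]]; [:: [:: 1]; [:: 0]; [:: 1]; [:: 3]; [:: 1]; [:: 5]]; [:: [:: 6]; [:: 7]; [:: 6]; [:: 4]; [:: 6]; [:: 2]]]).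
  exact: repE5.
by vm_compute.
Qed.

Lemma c_Two2_1 (R : realType) : compatible R TwoPeaksDist2 Type1.
Proof.
apply: (@pos_compat R TwoPeaksDist2 Type1 [:: 30; 32; 8; 56; 54; 76; 72; 58] tets1
  [:: [:: 2; 24; 44; 0; 0; 0; 30; 0]; [:: 48; 0; 64; 0; 22; 0; 30; 0]; [:: 22; 18; 24; 0; 0; 0; 30; 0]; [:: 0; 0; 2; 14; 18; 0; 88; 0]; [:: 15; 11; 31; 0; 0; 0; 30; 0]]
  [:: [:: [:: 1]; [:: 0]; [:: 1]; [:: 3]; [:: 1]; [:: 5]]; [:: [:: 2]; [:: 3]; [:: 2]; [:: 0]; [:: 2]; [:: 6]]; [:: [:: 4]; [:: 5]; [:: 4]; [:: 6]; [:: 4]; [:: 0]]; [:: [:: 7]; [:: 6]; [:: 7]; [:: 5]; [:: 7]; [:: 3]]; [:: [:: 0; 6]; [:: 3; 5]; [:: 0; 5]; [:: 3; 6]; [:: 0; 3]; [:: 5; 6]]]).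
  exact: repE1.
by vm_compute.
Qed.

Lemma c_Two2_2 (R : realType) : compatible R TwoPeaksDist2 Type2.
Proof.
apply: (@pos_compat R TwoPeaksDist2 Type2 [:: 78; 22; 44; 36; 8; 20; 68; 32] (dtets [:: 1; 2; 4])
  [:: [:: 0; 0; 0; 36; 6; 4; 78; 0]; [:: 0; 12; 0; 36; 0; 22; 78; 0]; [:: 0; 12; 0; 54; 0; 4; 78; 0]; [:: 0; 14; 0; 56; 0; 2; 78; 0]; [:: 0; 0; 24; 8; 34; 0; 78; 0]; [:: 12; 60; 0; 0; 0; 70; 78; 0]]
  [:: [:: [:: 7]; [:: 6]; [:: 0; 7]; [:: 3; 6]; [:: 7]; [:: 3]]; [:: [:: 7]; [:: 6]; [:: 7]; [:: 5]; [:: 0; 7]; [:: 6; 5]]; [:: [:: 0; 7]; [:: 5; 3]; [:: 7]; [:: 5]; [:: 7]; [:: 3]]; [:: [:: 1]; [:: 0]; [:: 1]; [:: 3]; [:: 1]; [:: 5]]; [:: [:: 2]; [:: 3]; [:: 2]; [:: 0]; [:: 2]; [:: 6]]; [:: [:: 4]; [:: 5]; [:: 4]; [:: 6]; [:: 4]; [:: 0]]]).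
  exact: repE2.
by vm_compute.
Qed.

Lemma c_Two2_3 (R : realType) : compatible R TwoPeaksDist2 Type3.
Proof.
apply: (@pos_compat R TwoPeaksDist2 Type3 [:: 68; 26; 38; 24; 30; 46; 10; 34] (dtets [:: 1])
  [:: [:: 0; 0; 10; 14; 30; 0; 68; 0]; [:: 24; 0; 0; 0; 30; 28; 68; 0]; [:: 24; 0; 0; 0; 20; 38; 68; 0]; [:: 16; 0; 0; 0; 12; 38; 68; 0]; [:: 0; 0; 10; 32; 12; 0; 68; 0]; [:: 0; 0; 20; 42; 2; 0; 68; 0]]
  [:: [:: [:: 3]; [:: 2]; [:: 0]; [:: 2]; [:: 7]; [:: 3]]; [:: [:: 7]; [:: 6]; [:: 0]; [:: 2]; [:: 2]; [:: 6]]; [:: [:: 7]; [:: 6]; [:: 6]; [:: 4]; [:: 0]; [:: 4]]; [:: [:: 4]; [:: 5]; [:: 7]; [:: 5]; [:: 0]; [:: 4]]; [:: [:: 0; 7]; [:: 5; 3]; [:: 7]; [:: 5]; [:: 7]; [:: 3]]; [:: [:: 1]; [:: 0]; [:: 1]; [:: 3]; [:: 1]; [:: 5]]]).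
  exact: repE3.
by vm_compute.
Qed.

Lemma c_Two2_4 (R : realType) : compatible R TwoPeaksDist2 Type4.
Proof.
apply: (@pos_compat R TwoPeaksDist2 Type4 [:: 78; 24; 20; 66; 32; 52; 36; 62] (dtets [:: 1; 2])
  [:: [:: 26; 0; 0; 0; 38; 4; 78; 0]; [:: 26; 4; 0; 0; 0; 46; 78; 0]; [:: 20; 10; 0; 0; 0; 46; 78; 0]; [:: 0; 10; 0; 22; 0; 4; 78; 0]; [:: 0; 42; 28; 54; 0; 0; 78; 0]; [:: 46; 0; 16; 0; 58; 0; 78; 0]]
  [:: [:: [:: 7]; [:: 6]; [:: 0; 7]; [:: 3; 6]; [:: 7]; [:: 3]]; [:: [:: 7]; [:: 6]; [:: 6]; [:: 4]; [:: 0]; [:: 4]]; [:: [:: 4]; [:: 5]; [:: 7]; [:: 5]; [:: 0]; [:: 4]]; [:: [:: 0; 7]; [:: 5; 3]; [:: 7]; [:: 5]; [:: 7]; [:: 3]]; [:: [:: 1]; [:: 0]; [:: 1]; [:: 3]; [:: 1]; [:: 5]]; [:: [:: 2]; [:: 3]; [:: 2]; [:: 0]; [:: 2]; [:: 6]]]).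
  exact: repE4.
by vm_compute.
Qed.

Lemma c_Two2_5 (R : realType) : compatible R TwoPeaksDist2 Type5.
Proof.
apply: (@pos_compat R TwoPeaksDist2 Type5 [:: 34; 18; 54; 46; 44; 48; 52; 74] (dtets [:: 1; 6])
  [:: [:: 0; 20; 28; 8; 0; 0; 34; 0]; [:: 10; 20; 10; 0; 0; 0; 34; 0]; [:: 4; 26; 10; 0; 0; 0; 34; 0]; [:: 0; 26; 28; 14; 0; 0; 34; 0]; [:: 0; 28; 30; 16; 0; 0; 34; 0]; [:: 22; 8; 0; 0; 0; 2; 46; 0]]
  [:: [:: [:: 3]; [:: 2]; [:: 0]; [:: 2]; [:: 7]; [:: 3]]; [:: [:: 0; 7]; [:: 2; 4]; [:: 0]; [:: 2]; [:: 0]; [:: 4]]; [:: [:: 4]; [:: 5]; [:: 7]; [:: 5]; [:: 0]; [:: 4]]; [:: [:: 0; 7]; [:: 5; 3]; [:: 7]; [:: 5]; [:: 7]; [:: 3]]; [:: [:: 1]; [:: 0]; [:: 1]; [:: 3]; [:: 1]; [:: 5]]; [:: [:: 6]; [:: 7]; [:: 6]; [:: 4]; [:: 6]; [:: 2]]]).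
  exact: repE5.
by vm_compute.
Qed.

Lemma c_Two2_6 (R : realType) : compatible R TwoPeaksDist2 Type6.
Proof.
apply: (@pos_compat R TwoPeaksDist2 Type6 [:: 74; 52; 20; 14; 56; 78; 30; 68] (dtets [::])
  [:: [:: 0; 0; 54; 22; 38; 0; 74; 0]; [:: 0; 0; 54; 6; 54; 0; 74; 0]; [:: 38; 0; 10; 0; 54; 0; 74; 0]; [:: 38; 0; 0; 0; 26; 18; 74; 0]; [:: 22; 0; 0; 0; 10; 18; 74; 0]; [:: 0; 0; 26; 22; 10; 0; 74; 0]]
  [:: [:: [:: 0]; [:: 1]; [:: 1]; [:: 3]; [:: 7]; [:: 3]]; [:: [:: 3]; [:: 2]; [:: 0]; [:: 2]; [:: 7]; [:: 3]]; [:: [:: 7]; [:: 6]; [:: 0]; [:: 2]; [:: 2]; [:: 6]]; [:: [:: 7]; [:: 6]; [:: 6]; [:: 4]; [:: 0]; [:: 4]]; [:: [:: 4]; [:: 5]; [:: 7]; [:: 5]; [:: 0]; [:: 4]]; [:: [:: 0]; [:: 1]; [:: 7]; [:: 5]; [:: 5]; [:: 1]]]).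
  exact: repE6.
by vm_compute.
Qed.

Lemma c_Two3_1 (R : realType) : compatible R TwoPeaksDist3 Type1.
Proof.
apply: (@pos_compat R TwoPeaksDist3 Type1 [:: 72; 78; 16; 70; 18; 76; 30; 24] tets1
  [:: [:: 6; 0; 0; 0; 8; 2; 72; 0]; [:: 54; 0; 14; 0; 56; 0; 72; 0]; [:: 58; 12; 0; 0; 0; 54; 72; 0]; [:: 0; 0; 0; 6; 52; 46; 128; 0]; [:: 22; 0; 0; 0; 24; 18; 72; 0]]
  [:: [:: [:: 1]; [:: 0]; [:: 1]; [:: 3]; [:: 1]; [:: 5]]; [:: [:: 2]; [:: 3]; [:: 2]; [:: 0]; [:: 2]; [:: 6]]; [:: [:: 4]; [:: 5]; [:: 4]; [:: 6]; [:: 4]; [:: 0]]; [:: [:: 7]; [:: 6]; [:: 7]; [:: 5]; [:: 7]; [:: 3]]; [:: [:: 0; 6]; [:: 3; 5]; [:: 0; 5]; [:: 3; 6]; [:: 0; 3]; [:: 5; 6]]]).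
  exact: repE1.
by vm_compute.
Qed.

Lemma c_Two3_2 (R : realType) : compatible R TwoPeaksDist3 Type2.
Proof.
apply: (@pos_compat R TwoPeaksDist3 Type2 [:: 36; 18; 0; 42; 14; 54; 48; 64] (dtets [:: 1; 2; 4])
  [:: [:: 16; 0; 22; 0; 10; 0; 36; 0]; [:: 16; 10; 2; 0; 0; 0; 36; 0]; [:: 0; 10; 22; 4; 0; 0; 36; 0]; [:: 0; 24; 36; 18; 0; 0; 36; 0]; [:: 42; 0; 48; 0; 36; 0; 36; 0]; [:: 40; 34; 0; 0; 0; 22; 36; 0]]
  [:: [:: [:: 7]; [:: 6]; [:: 0; 7]; [:: 3; 6]; [:: 7]; [:: 3]]; [:: [:: 7]; [:: 6]; [:: 7]; [:: 5]; [:: 0; 7]; [:: 6; 5]]; [:: [:: 0; 7]; [:: 5; 3]; [:: 7]; [:: 5]; [:: 7]; [:: 3]]; [:: [:: 1]; [:: 0]; [:: 1]; [:: 3]; [:: 1]; [:: 5]]; [:: [:: 2]; [:: 3]; [:: 2]; [:: 0]; [:: 2]; [:: 6]]; [:: [:: 4]; [:: 5]; [:: 4]; [:: 6]; [:: 4]; [:: 0]]]).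
  exact: repE2.
by vm_compute.
Qed.

Lemma c_Two3_3 (R : realType) : compatible R TwoPeaksDist3 Type3.
Proof.
apply: (@pos_compat R TwoPeaksDist3 Type3 [:: 74; 18; 14; 48; 56; 44; 2; 60] (dtets [:: 1])
  [:: [:: 34; 0; 12; 0; 60; 0; 74; 0]; [:: 58; 0; 0; 0; 60; 12; 74; 0]; [:: 58; 0; 0; 0; 54; 18; 74; 0]; [:: 0; 16; 0; 12; 0; 18; 74; 0]; [:: 0; 16; 12; 42; 0; 0; 74; 0]; [:: 0; 30; 26; 56; 0; 0; 74; 0]]
  [:: [:: [:: 3]; [:: 2]; [:: 0]; [:: 2]; [:: 7]; [:: 3]]; [:: [:: 7]; [:: 6]; [:: 0]; [:: 2]; [:: 2]; [:: 6]]; [:: [:: 7]; [:: 6]; [:: 6]; [:: 4]; [:: 0]; [:: 4]]; [:: [:: 4]; [:: 5]; [:: 7]; [:: 5]; [:: 0]; [:: 4]]; [:: [:: 0; 7]; [:: 5; 3]; [:: 7]; [:: 5]; [:: 7]; [:: 3]]; [:: [:: 1]; [:: 0]; [:: 1]; [:: 3]; [:: 1]; [:: 5]]]).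
  exact: repE3.
by vm_compute.
Qed.

Lemma c_Two3_4 (R : realType) : compatible R TwoPeaksDist3 Type4.
Proof.
apply: (@pos_compat R TwoPeaksDist3 Type4 [:: 24; 8; 20; 56; 18; 32; 58; 74] (dtets [:: 1; 2])
  [:: [:: 16; 16; 18; 0; 0; 0; 24; 0]; [:: 16; 40; 0; 0; 0; 6; 24; 0]; [:: 14; 42; 0; 0; 0; 6; 24; 0]; [:: 0; 42; 18; 10; 0; 0; 24; 0]; [:: 0; 48; 24; 16; 0; 0; 24; 0]; [:: 36; 0; 38; 0; 4; 0; 24; 0]]
  [:: [:: [:: 7]; [:: 6]; [:: 0; 7]; [:: 3; 6]; [:: 7]; [:: 3]]; [:: [:: 7]; [:: 6]; [:: 6]; [:: 4]; [:: 0]; [:: 4]]; [:: [:: 4]; [:: 5]; [:: 7]; [:: 5]; [:: 0]; [:: 4]]; [:: [:: 0; 7]; [:: 5; 3]; [:: 7]; [:: 5]; [:: 7]; [:: 3]]; [:: [:: 1]; [:: 0]; [:: 1]; [:: 3]; [:: 1]; [:: 5]]; [:: [:: 2]; [:: 3]; [:: 2]; [:: 0]; [:: 2]; [:: 6]]]).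
  exact: repE4.
by vm_compute.
Qed.

Lemma c_Two3_5 (R : realType) : compatible R TwoPeaksDist3 Type5.
Proof.
apply: (@pos_compat R TwoPeaksDist3 Type5 [:: 34; 8; 32; 22; 12; 18; 6; 26] (dtets [:: 1; 6])
  [:: [:: 0; 0; 4; 10; 2; 0; 34; 0]; [:: 16; 0; 0; 0; 2; 22; 34; 0]; [:: 6; 8; 0; 0; 0; 22; 34; 0]; [:: 0; 8; 4; 20; 0; 0; 34; 0]; [:: 0; 14; 10; 26; 0; 0; 34; 0]; [:: 20; 0; 0; 0; 6; 26; 38; 0]]
  [:: [:: [:: 3]; [:: 2]; [:: 0]; [:: 2]; [:: 7]; [:: 3]]; [:: [:: 0; 7]; [:: 2; 4]; [:: 0]; [:: 2]; [:: 0]; [:: 4]]; [:: [:: 4]; [:: 5]; [:: 7]; [:: 5]; [:: 0]; [:: 4]]; [:: [:: 0; 7]; [:: 5; 3]; [:: 7]; [:: 5]; [:: 7]; [:: 3]]; [:: [:: 1]; [:: 0]; [:: 1]; [:: 3]; [:: 1]; [:: 5]]; [:: [:: 6]; [:: 7]; [:: 6]; [:: 4]; [:: 6]; [:: 2]]]).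
  exact: repE5.
by vm_compute.
Qed.

Lemma c_Two3_6 (R : realType) : compatible R TwoPeaksDist3 Type6.
Proof.
apply: (@pos_compat R TwoPeaksDist3 Type6 [:: 52; 8; 48; 18; 16; 42; 14; 74] (dtets [::])
  [:: [:: 0; 10; 56; 44; 0; 0; 52; 0]; [:: 0; 0; 56; 30; 4; 0; 52; 0]; [:: 60; 0; 0; 0; 4; 34; 52; 0]; [:: 60; 0; 0; 0; 2; 36; 52; 0]; [:: 26; 32; 0; 0; 0; 36; 52; 0]; [:: 0; 32; 34; 44; 0; 0; 52; 0]]
  [:: [:: [:: 0]; [:: 1]; [:: 1]; [:: 3]; [:: 7]; [:: 3]]; [:: [:: 3]; [:: 2]; [:: 0]; [:: 2]; [:: 7]; [:: 3]]; [:: [:: 7]; [:: 6]; [:: 0]; [:: 2]; [:: 2]; [:: 6]]; [:: [:: 7]; [:: 6]; [:: 6]; [:: 4]; [:: 0]; [:: 4]]; [:: [:: 4]; [:: 5]; [:: 7]; [:: 5]; [:: 0]; [:: 4]]; [:: [:: 0]; [:: 1]; [:: 7]; [:: 5]; [:: 5]; [:: 1]]]).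
  exact: repE6.
by vm_compute.
Qed.

Definition quads3 : seq (seq nat) := [:: [:: 0; 3; 1; 2]; [:: 7; 2; 6; 3]; [:: 3; 0; 2; 1]; [:: 2; 7; 3; 6]; [:: 0; 6; 2; 4]; [:: 6; 0; 4; 2]; [:: 7; 4; 6; 5]; [:: 4; 7; 5; 6]; [:: 0; 5; 1; 4]; [:: 5; 0; 4; 1]; [:: 5; 3; 7; 1]; [:: 3; 5; 1; 7]].
Definition quads4 : seq (seq nat) := [:: [:: 0; 3; 1; 2]; [:: 0; 6; 2; 4]; [:: 3; 0; 2; 1]; [:: 3; 6; 2; 7]; [:: 6; 0; 4; 2]; [:: 6; 3; 7; 2]; [:: 7; 4; 6; 5]; [:: 4; 7; 5; 6]; [:: 0; 5; 1; 4]; [:: 5; 0; 4; 1]; [:: 5; 3; 7; 1]; [:: 3; 5; 1; 7]].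
Definition quads5 : seq (seq nat) := [:: [:: 0; 3; 1; 2]; [:: 7; 2; 6; 3]; [:: 3; 0; 2; 1]; [:: 2; 7; 3; 6]; [:: 7; 4; 6; 5]; [:: 2; 4; 0; 6]; [:: 4; 7; 5; 6]; [:: 4; 2; 6; 0]; [:: 0; 5; 1; 4]; [:: 5; 0; 4; 1]; [:: 5; 3; 7; 1]; [:: 3; 5; 1; 7]].
Definition quads6 : seq (seq nat) := [:: [:: 0; 3; 1; 2]; [:: 7; 1; 5; 3]; [:: 1; 7; 3; 5]; [:: 3; 0; 2; 1]; [:: 7; 2; 6; 3]; [:: 2; 7; 3; 6]; [:: 0; 6; 2; 4]; [:: 6; 0; 4; 2]; [:: 7; 4; 6; 5]; [:: 4; 7; 5; 6]; [:: 0; 5; 1; 4]; [:: 5; 0; 4; 1]].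

Lemma n_Four_3 (R : realType) : ~ compatible R FourPeaks Type3.
Proof. by apply: (@four_neg R Type3 (dtets [:: 1]) quads3); [exact: repE3 | vm_compute | vm_compute]. Qed.
Lemma n_Four_4 (R : realType) : ~ compatible R FourPeaks Type4.
Proof. by apply: (@four_neg R Type4 (dtets [:: 1; 2]) quads4); [exact: repE4 | vm_compute | vm_compute]. Qed.
Lemma n_Four_5 (R : realType) : ~ compatible R FourPeaks Type5.
Proof. by apply: (@four_neg R Type5 (dtets [:: 1; 6]) quads5); [exact: repE5 | vm_compute | vm_compute]. Qed.
Lemma n_Four_6 (R : realType) : ~ compatible R FourPeaks Type6.
Proof. by apply: (@four_neg R Type6 (dtets [::]) quads6); [exact: repE6 | vm_compute | vm_compute]. Qed.
Lemma n_Three_6 (R : realType) : ~ compatible R ThreePeaks Type6.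
Proof. by apply: (@three_neg R Type6 (dtets [::]) quads6); [exact: repE6 | vm_compute | vm_compute]. Qed.

Local Close Scope ring_scope.
Unset Implicit Arguments.

Theorem theorem1 (R : realType) :
  (forall T, compatible R FourPeaks T <-> T = Type1 \/ T = Type2) /\
  (forall T, compatible R ThreePeaks T <-> T <> Type6) /\
  (forall T, compatible R OnePeak T /\ compatible R TwoPeaksDist2 T /\
             compatible R TwoPeaksDist3 T).
Proof.
split; [|split].
- move=> T; split.
  + case: T => h; [by left | by right | exfalso | exfalso | exfalso | exfalso].
    * exact: n_Four_3 h.
    * exact: n_Four_4 h.
    * exact: n_Four_5 h.
    * exact: n_Four_6 h.
  + by case=> ->; [exact: c_Four_1 | exact: c_Four_2].
- move=> T; split.
  + by case: T => // h _; exact: n_Three_6 h.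
  + case: T => h; [exact: c_Three_1 | exact: c_Three_2 | exact: c_Three_3 | exact: c_Three_4
                  | exact: c_Three_5 | by exfalso; apply: h].
- case; split; (try split);
    solve [ exact: c_One_1 | exact: c_One_2 | exact: c_One_3 | exact: c_One_4 | exact: c_One_5
          | exact: c_One_6 | exact: c_Two2_1 | exact: c_Two2_2 | exact: c_Two2_3 | exact: c_Two2_4
          | exact: c_Two2_5 | exact: c_Two2_6 | exact: c_Two3_1 | exact: c_Two3_2 | exact: c_Two3_3
          | exact: c_Two3_4 | exact: c_Two3_5 | exact: c_Two3_6 ].
Qed.
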